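(* Let $G$ be a group satisfying the property $\mathsf{FM}$ and $\nu$ a conjugation-invariant pseudo-norm on $G$. Then for any elements $g_1,\dots,g_k\in G$ and real numbers $s_1,\dots,s_k$, the limit \[ \lim_{n\to\infty}\frac1n\,\nu\big(g_1^{[s_1n]}\cdots g_k^{[s_kn]}\big) \] exists, where $[\cdot]$ denotes the integer part.
   Context: A conjugation-invariant pseudo-norm on a group $G$ is a function $\nu\colon G\to\mathbb{R}_{\ge0}$ with $\nu(1)=0$, $\nu(f)=\nu(f^{-1})$, $\nu(fg)\le\nu(f)+\nu(g)$ and $\nu(gfg^{-1})=\nu(f)$ for all $f,g\in G$. For a subgroup $H\le G$, the fragmentation norm $\nu_H(f)$ is the minimal $k$ such that $f=g_1h_1g_1^{-1}\cdots g_kh_kg_k^{-1}$ with $g_i\in G$, $h_i\in H$ ($\infty$ if none exists); $G$ is c-generated by $H$ if $\nu_H$ is finite everywhere. For $K\subset G$, $\mathrm{D}^f_H(K)$ is the set of $h_0\in G$ such that for all $g_1,\dots,g_k\in G$ there is $h\in G$ such that every element of $hh_0h^{-1}K(hh_0h^{-1})^{-1}$ commutes with every element of $g_1Hg_1^{-1}\cup\dots\cup g_kHg_k^{-1}$. $(G,H)$ satisfies property $\mathsf{FM}$ if $G$ is c-generated by $H$ and $\mathrm{D}^f_H(h_1Hh_1^{-1}\cup\dots\cup h_kHh_k^{-1})\ne\emptyset$ for all $h_1,\dots,h_k\in G$; $G$ satisfies $\mathsf{FM}$ if $(G,H)$ does for some subgroup $H$. *)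

(* Defs.v *)
From Stdlib Require Import Reals ZArith List.
Open Scope R_scope.

Record Group := {
  carrier :> Type;
  gmul : carrier -> carrier -> carrier;
  gone : carrier;
  ginv : carrier -> carrier;
  gmulA : forall x y z, gmul x (gmul y z) = gmul (gmul x y) z;
  gmul1 : forall x, gmul gone x = x;
  gmulg1 : forall x, gmul x gone = x;
  gmulV : forall x, gmul (ginv x) x = gone;
  gmulgV : forall x, gmul x (ginv x) = gone
}.

Arguments gmul {G} : rename.
Arguments gone {G} : rename.
Arguments ginv {G} : rename.

Definition gconj {G : Group} (g f : G) : G := gmul g (gmul f (ginv g)).

Definition gcommute {G : Group} (x y : G) : Prop := gmul x y = gmul y x.

Fixpoint npow {G : Group} (g : G) (n : nat) : G :=
  match n with
  | O => gone
  | S n' => gmul g (npow g n')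
  end.

Definition zpow {G : Group} (g : G) (z : Z) : G :=
  match z with
  | Z0 => gone
  | Zpos p => npow g (Pos.to_nat p)
  | Zneg p => ginv (npow g (Pos.to_nat p))
  end.

Definition conj_inv_pseudo_norm {G : Group} (nu : G -> R) : Prop :=
  nu gone = 0 /\
  (forall f, 0 <= nu f) /\
  (forall f, nu f = nu (ginv f)) /\
  (forall f g, nu (gmul f g) <= nu f + nu g) /\
  (forall f g, nu (gconj g f) = nu f).

Definition is_subgroup {G : Group} (H : G -> Prop) : Prop :=
  H gone /\ (forall x y, H x -> H y -> H (gmul x y)) /\ (forall x, H x -> H (ginv x)).

Fixpoint prod_of_conj {G : Group} (H : G -> Prop) (k : nat) (f : G) : Prop :=
  match k with
  | O => f = gone
  | S k' => exists g h f', H h /\ prod_of_conj H k' f' /\ f = gmul (gconj g h) f'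
  end.

(* G is c-generated by H : the fragmentation norm nu_H is finite everywhere *)
Definition c_generated (G : Group) (H : G -> Prop) : Prop :=
  forall f : G, exists k, prod_of_conj H k f.

Definition in_conj_union {G : Group} (H : G -> Prop) (gs : list G) (y : G) : Prop :=
  exists g, In g gs /\ exists z, H z /\ y = gconj g z.

Definition Df {G : Group} (H : G -> Prop) (K : G -> Prop) (h0 : G) : Prop :=
  forall gs : list G, exists h : G,
    forall x, K x -> forall y, in_conj_union H gs y ->
      gcommute (gconj (gconj h h0) x) y.

Definition FM_pair (G : Group) (H : G -> Prop) : Prop :=
  c_generated G H /\
  forall hs : list G, exists h0 : G, Df H (in_conj_union H hs) h0.

Definition FM (G : Group) : Prop :=
  exists H : G -> Prop, is_subgroup H /\ FM_pair G H.

(* g_0^{[s_0 n]} g_1^{[s_1 n]} ... g_{k-1}^{[s_{k-1} n]} ; Int_part = floor *)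
Definition word_at {G : Group} (k : nat) (g : nat -> G) (s : nat -> R) (n : nat) : G :=
  fold_right (fun i acc => gmul (zpow (g i) (Int_part (s i * INR n))) acc)
    gone (seq 0 k).

(* Main.v *)
Require Import Defs.
From Stdlib Require Import Reals ZArith List Lra Lia.
Open Scope R_scope.

Lemma ginv_unique (G:Group) (a b : G) : gmul a b = gone -> b = ginv a.
Proof. intro H. rewrite <- (gmul1 _ b), <- (gmulV _ a), <- gmulA, H, gmulg1. reflexivity. Qed.

Lemma ginv_mul (G:Group) (a b : G) : ginv (gmul a b) = gmul (ginv b) (ginv a).
Proof. symmetry; apply ginv_unique. rewrite <- gmulA, (gmulA _ b), gmulgV, gmul1, gmulgV. reflexivity. Qed.

Lemma ginv_ginv (G:Group) (a : G) : ginv (ginv a) = a.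
Proof. symmetry; apply ginv_unique; apply gmulV. Qed.

Lemma ginv_one (G:Group) : ginv (@gone G) = gone.
Proof. symmetry; apply ginv_unique; apply gmul1. Qed.

Lemma comm_sym (G:Group) (a b : G) : gcommute a b -> gcommute b a.
Proof. unfold gcommute; auto. Qed.

Lemma comm_one (G:Group) (a : G) : gcommute a gone.
Proof. unfold gcommute; rewrite gmul1, gmulg1; auto. Qed.

Lemma comm_self (G:Group) (a : G) : gcommute a a.
Proof. unfold gcommute; auto. Qed.

Lemma comm_mul_r (G:Group) (x a b : G) : gcommute x a -> gcommute x b -> gcommute x (gmul a b).
Proof. unfold gcommute; intros H1 H2. rewrite gmulA, H1, <- gmulA, H2, gmulA. reflexivity. Qed.

Lemma comm_inv_r (G:Group) (x a : G) : gcommute x a -> gcommute x (ginv a).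
Proof. unfold gcommute; intros H.
  assert (E: gmul (ginv a) (gmul (gmul a x) (ginv a)) = gmul x (ginv a))
    by (rewrite !gmulA, gmulV, gmul1; reflexivity).
  assert (E2: gmul (ginv a) (gmul (gmul x a) (ginv a)) = gmul (ginv a) x)
    by (rewrite <- (gmulA _ x a), gmulgV, gmulg1; reflexivity).
  rewrite <- E, <- H, E2. reflexivity. Qed.

Lemma comm_npow_r (G:Group) (x a : G) n : gcommute x a -> gcommute x (npow a n).
Proof. intro H; induction n; simpl. apply comm_one. apply comm_mul_r; auto. Qed.

Lemma comm_zpow_r (G:Group) (x a : G) z : gcommute x a -> gcommute x (zpow a z).
Proof. intro H; destruct z; simpl. apply comm_one. apply comm_npow_r; auto.
  apply comm_inv_r, comm_npow_r; auto. Qed.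

Lemma comm_zpow (G:Group) (a b : G) x y : gcommute a b -> gcommute (zpow a x) (zpow b y).
Proof. intro H. apply comm_zpow_r. apply comm_sym, comm_zpow_r, comm_sym; auto. Qed.

Lemma zpow_succ (G:Group) (g : G) z : zpow g (z+1) = gmul g (zpow g z).
Proof.
  destruct z as [|p|p].
  - reflexivity.
  - simpl. rewrite Pos.add_1_r, Pos2Nat.inj_succ. reflexivity.
  - destruct (Pos.succ_pred_or p) as [->|Hp].
    + simpl. rewrite gmulg1, gmulgV. reflexivity.
    + rewrite <- Hp. set (q := Pos.pred p).
      replace (Z.neg (Pos.succ q) + 1)%Z with (Z.neg q) by lia.
      simpl. rewrite Pos2Nat.inj_succ. simpl. rewrite ginv_mul.
      assert (C: gcommute g (ginv (npow g (Pos.to_nat q)))) by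
        (apply comm_inv_r, comm_npow_r, comm_self).
      rewrite gmulA, C, <- gmulA, gmulgV, gmulg1. reflexivity.
Qed.

Lemma zpow_pred (G:Group) (g : G) z : zpow g (z-1) = gmul (ginv g) (zpow g z).
Proof. pose proof (zpow_succ G g (z-1)). replace (z-1+1)%Z with z in H by lia.
  rewrite H, gmulA, gmulV, gmul1. reflexivity. Qed.

Lemma zpow_add (G:Group) (g : G) x y : zpow g (x+y) = gmul (zpow g x) (zpow g y).
Proof.
  induction x using Z.peano_ind.
  - simpl. rewrite gmul1. reflexivity.
  - replace (Z.succ x + y)%Z with ((x+y)+1)%Z by lia. unfold Z.succ.
    rewrite !zpow_succ, IHx, gmulA. reflexivity.
  - replace (Z.pred x + y)%Z with ((x+y)-1)%Z by lia. replace (Z.pred x) with (x-1)%Z by lia.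
    rewrite (zpow_pred G g x), zpow_pred, IHx, gmulA. reflexivity.
Qed.

Lemma conj_mul (G:Group) (c a b : G) : gconj c (gmul a b) = gmul (gconj c a) (gconj c b).
Proof. unfold gconj. rewrite !gmulA. rewrite <- (gmulA _ (gmul c a) (ginv c) c), gmulV, gmulg1.
  reflexivity. Qed.

Lemma conj_one (G:Group) (c : G) : gconj c gone = gone.
Proof. unfold gconj. rewrite gmul1, gmulgV. reflexivity. Qed.

Lemma conj_inv (G:Group) (c a : G) : gconj c (ginv a) = ginv (gconj c a).
Proof. apply ginv_unique. rewrite <- conj_mul, gmulgV, conj_one. reflexivity. Qed.

Lemma conj_npow (G:Group) (c g : G) n : npow (gconj c g) n = gconj c (npow g n).
Proof. induction n; simpl. rewrite conj_one; auto. rewrite IHn, conj_mul; auto. Qed.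

Lemma conj_zpow (G:Group) (c g : G) z : zpow (gconj c g) z = gconj c (zpow g z).
Proof. destruct z; simpl. rewrite conj_one; auto. apply conj_npow.
  rewrite conj_npow, conj_inv; auto. Qed.

Lemma conj_conj_inv (G:Group) (c a : G) : gconj (ginv c) (gconj c a) = a.
Proof. unfold gconj. rewrite ginv_ginv, !gmulA, gmulV, gmul1, <- gmulA, gmulV, gmulg1. reflexivity. Qed.

Inductive gen {G:Group} (P : G -> Prop) : G -> Prop :=
| gen_one : gen P gone
| gen_mul : forall x y, P x -> gen P y -> gen P (gmul x y).

Lemma gen_mono (G:Group) (P Q : G -> Prop) f : (forall x, P x -> Q x) -> gen P f -> gen Q f.
Proof. intros HPQ H; induction H. constructor. constructor; auto. Qed.

Lemma icu_mono (G:Group) (H : G -> Prop) l l' y : incl l l' -> in_conj_union H l y -> in_conj_union H l' y.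
Proof. intros Hi [g [Hg Hz]]. exists g; split; auto. Qed.

Lemma prod_conj_gen (G:Group) (H : G -> Prop) k f : prod_of_conj H k f -> exists hs, gen (in_conj_union H hs) f.
Proof.
  revert f; induction k; simpl; intros f Hf.
  - subst. exists nil. constructor.
  - destruct Hf as [g [h [f' [Hh [Hp ->]]]]].
    destruct (IHk f' Hp) as [hs Hs]. exists (g :: hs). constructor.
    + exists g. split; [left; auto|]. exists h; auto.
    + apply gen_mono with (P := in_conj_union H hs); auto.
      intros; apply icu_mono with hs; auto. intros z Hz; right; auto.
Qed.

Lemma gen_list (G:Group) (H : G -> Prop) (bs : list G) : c_generated G H ->
  exists gs, forall b, In b bs -> gen (in_conj_union H gs) b.
Proof.
  intro Hc. induction bs as [|b bs IH].
  - exists nil. intros b [].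
  - destruct IH as [gs Hgs]. destruct (Hc b) as [k Hk]. destruct (prod_conj_gen G H k b Hk) as [hs Hhs].
    exists (hs ++ gs). intros b' [<-|Hb'].
    + apply gen_mono with (P := in_conj_union H hs); auto.
      intros; apply icu_mono with hs; auto. intros z Hz; apply in_or_app; auto.
    + apply gen_mono with (P := in_conj_union H gs); auto.
      intros; apply icu_mono with gs; auto. intros z Hz; apply in_or_app; auto.
Qed.

Lemma comm_gen (G:Group) (P : G -> Prop) x f : (forall y, P y -> gcommute x y) -> gen P f -> gcommute x f.
Proof. intros Hy H; induction H. apply comm_one. apply comm_mul_r; auto. Qed.

Lemma conj_gen (G:Group) (P : G -> Prop) c f : gen P f ->
  gen (fun y => exists x, P x /\ y = gconj c x) (gconj c f).
Proof. intro H; induction H. rewrite conj_one; constructor.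
  rewrite conj_mul. constructor; auto. exists x; auto. Qed.

Lemma displace (G:Group) : FM G -> forall (a : G) (bs : list G),
  exists c, forall b, In b bs -> gcommute (gconj c a) b.
Proof.
  intros [H [_ [Hcg HD]]] a bs.
  destruct (Hcg a) as [k Hk]. destruct (prod_conj_gen G H k a Hk) as [hs Hhs].
  destruct (gen_list G H bs Hcg) as [gs Hgs].
  destruct (HD hs) as [h0 Hh0]. destruct (Hh0 gs) as [h Hh].
  exists (gconj h h0). intros b Hb.
  apply comm_gen with (P := in_conj_union H gs); auto.
  intros y Hy. apply comm_sym.
  apply comm_gen with (P := fun y => exists x, in_conj_union H hs x /\ y = gconj (gconj h h0) x).
  - intros z [x [Hx ->]]. apply comm_sym, Hh; auto.
  - apply conj_gen; auto.
Qed.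

Lemma family (G:Group) : FM G -> forall (g : nat -> G) k, exists c : nat -> G,
  forall i j, (i < k)%nat -> (j < k)%nat -> i <> j ->
    gcommute (gconj (c i) (g i)) (gconj (c j) (g j)).
Proof.
  intros HF g k. induction k.
  - exists (fun _ => gone). intros; lia.
  - destruct IHk as [c Hc].
    destruct (displace G HF (g k) (map (fun i => gconj (c i) (g i)) (seq 0 k))) as [d Hd].
    exists (fun i => if Nat.eqb i k then d else c i).
    intros i j Hi Hj Hij.
    destruct (Nat.eqb_spec i k); destruct (Nat.eqb_spec j k).
    + lia.
    + subst i. apply Hd. apply in_map_iff. exists j. split; auto. apply in_seq. lia.
    + subst j. apply comm_sym. apply Hd. apply in_map_iff. exists i. split; auto. apply in_seq. lia.
    + apply Hc; lia.
Qed.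

Definition Pw {G:Group} (h : nat -> G) (v : nat -> Z) (l : list nat) : G :=
  fold_right (fun i acc => gmul (zpow (h i) (v i)) acc) gone l.

Definition sumR (f : nat -> R) (l : list nat) : R := fold_right (fun i acc => f i + acc) 0 l.

Lemma sumR_nonneg f l : (forall i, 0 <= f i) -> 0 <= sumR f l.
Proof. intro H; induction l; simpl. lra. specialize (H a); lra. Qed.

Lemma Pw_ext (G:Group) (h : nat -> G) v w l : (forall i, v i = w i) -> Pw h v l = Pw h w l.
Proof. intro H; induction l; simpl; auto. rewrite H, IHl; auto. Qed.

Lemma comm_Pw (G:Group) (h : nat -> G) v l x :
  (forall j, In j l -> forall y, gcommute x (zpow (h j) y)) -> gcommute x (Pw h v l).
Proof. induction l; simpl; intros H. apply comm_one. apply comm_mul_r; auto. Qed.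

Lemma Pw_add (G:Group) (h : nat -> G) v w l :
  (forall i j, In i l -> In j l -> forall x y, gcommute (zpow (h i) x) (zpow (h j) y)) ->
  Pw h (fun i => (v i + w i)%Z) l = gmul (Pw h v l) (Pw h w l).
Proof.
  induction l as [|a l IH]; simpl; intros Hc.
  - rewrite gmul1; auto.
  - rewrite IH by (intros; apply Hc; auto). rewrite zpow_add.
    assert (C: gcommute (zpow (h a) (w a)) (Pw h v l)).
    { apply comm_Pw. intros j Hj y. apply Hc; auto. }
    rewrite !gmulA. f_equal. rewrite <- !gmulA. f_equal. exact C.
Qed.

Lemma Rabs_le_inv a b : Rabs a <= b -> - b <= a <= b.
Proof. intro H. split_Rabs; lra. Qed.

Lemma nu_cyc (G:Group) (nu : G -> R) a b : conj_inv_pseudo_norm nu -> nu (gmul a b) = nu (gmul b a).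
Proof. intros (_&_&_&_&Hc). rewrite <- (Hc (gmul a b) b). unfold gconj.
  rewrite !gmulA, <- (gmulA _ _ b), gmulgV, gmulg1. reflexivity. Qed.

Lemma nu_step (G:Group) (nu : G -> R) x c A Y : conj_inv_pseudo_norm nu ->
  nu (gmul x (gmul (gconj c A) Y)) <= nu (gmul x (gmul A Y)) + 2 * nu c.
Proof.
  intros Hn. pose proof Hn as (_&_&Hi&Ht&_).
  unfold gconj.
  replace (gmul x (gmul (gmul c (gmul A (ginv c))) Y)) with
    (gmul (gmul x c) (gmul A (gmul (ginv c) Y))) by (rewrite !gmulA; reflexivity).
  rewrite nu_cyc by auto.
  replace (gmul (gmul A (gmul (ginv c) Y)) (gmul x c)) with
    (gmul (gmul A (gmul (ginv c) (gmul Y x))) c) by (rewrite !gmulA; reflexivity).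
  rewrite nu_cyc by auto.
  pose proof (Ht c (gmul A (gmul (ginv c) (gmul Y x)))).
  rewrite (nu_cyc G nu A) in H by auto.
  pose proof (Ht (ginv c) (gmul (gmul Y x) A)).
  rewrite <- gmulA in H0. rewrite <- Hi in H0.
  replace (gmul (gmul Y x) A) with (gmul Y (gmul x A)) in H0 by (rewrite gmulA; auto).
  rewrite (nu_cyc G nu Y) in H0 by auto.
  rewrite <- gmulA in H0.
  replace (gmul (gmul (ginv c) (gmul Y x)) A) with (gmul (ginv c) (gmul Y (gmul x A))) in H
    by (rewrite !gmulA; reflexivity). lra.
Qed.

Lemma nu_cmp (G:Group) (nu : G -> R) (g c : nat -> G) v l x : conj_inv_pseudo_norm nu ->
  Rabs (nu (gmul x (Pw g v l)) - nu (gmul x (Pw (fun i => gconj (c i) (g i)) v l)))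
    <= sumR (fun i => 2 * nu (c i)) l.
Proof.
  intros Hn. pose proof Hn as (_&_&Hi&_&_).
  revert x; induction l as [|a l IH]; intro x; simpl.
  - rewrite Rminus_diag, Rabs_R0. lra.
  - rewrite conj_zpow.
    set (A := zpow (g a) (v a)). set (Y := Pw (fun i => gconj (c i) (g i)) v l).
    specialize (IH (gmul x A)). rewrite <- !gmulA in IH. fold Y in IH.
    pose proof (nu_step G nu x (c a) A Y Hn).
    pose proof (nu_step G nu x (ginv (c a)) (gconj (c a) A) Y Hn).
    rewrite conj_conj_inv, <- Hi in H0.
    apply Rabs_le. apply Rabs_le_inv in IH. lra.
Qed.

Lemma nu_Pw01 (G:Group) (nu : G -> R) (h : nat -> G) e l : conj_inv_pseudo_norm nu ->
  (forall i, e i = 0%Z \/ e i = 1%Z) -> nu (Pw h e l) <= sumR (fun i => nu (h i)) l.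
Proof.
  intros Hn He. pose proof Hn as (H0&_&_&Ht&_).
  induction l as [|a l IH]; simpl. lra.
  eapply Rle_trans. apply Ht. enough (nu (zpow (h a) (e a)) <= nu (h a)) by lra.
  destruct (He a) as [-> | ->]; simpl. rewrite H0. apply Hn. rewrite gmulg1; lra.
Qed.

Lemma Rdiv_le_0_compat' a b : 0 <= a -> 0 < b -> 0 <= a / b.
Proof. intros. unfold Rdiv. apply Rmult_le_pos; auto. left; apply Rinv_0_lt_compat; auto. Qed.

Lemma transfer (x y : nat -> R) (l K : R) :
  Un_cv (fun n => y n / INR n) l -> (forall n, Rabs (x n - y n) <= K) ->
  Un_cv (fun n => x n / INR n) l.
Proof.
  intros Hy HK eps Heps.
  assert (K0 : 0 <= K) by (eapply Rle_trans; [apply Rabs_pos | apply (HK 0%nat)]).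
  destruct (Hy (eps/2)) as [N1 HN1]; [lra|].
  destruct (archimed_cor1 (eps / (2 * (K+1)))) as [N2 [HN2 HN2p]].
  { apply Rdiv_lt_0_compat; lra. }
  exists (max N1 N2). intros n Hn.
  assert (Hn1 : (n >= N1)%nat) by lia. assert (Hn2 : (N2 <= n)%nat) by lia.
  specialize (HN1 n Hn1). unfold Rdist in *.
  assert (P2 : 0 < INR N2) by (apply lt_0_INR; lia).
  assert (Pn : INR N2 <= INR n) by (apply le_INR; lia).
  assert (Pn' : 0 < INR n) by lra.
  assert (Hr : / INR n <= / INR N2) by (apply Rinv_le_contravar; lra).
  assert (Hr0 : 0 < / INR n) by (apply Rinv_0_lt_compat; lra).
  unfold Rdiv in *.
  replace (x n * / INR n - l) with ((x n - y n) * / INR n + (y n * / INR n - l)) by ring.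
  eapply Rle_lt_trans. apply Rabs_triang.
  rewrite Rabs_mult, (Rabs_pos_eq (/ INR n)) by lra.
  assert (E1 : Rabs (x n - y n) * / INR n <= K * / INR N2).
  { apply Rmult_le_compat; auto using Rabs_pos; lra. }
  assert (E2 : K * / INR N2 <= K * (eps * / (2 * (K + 1)))) by (apply Rmult_le_compat_l; lra).
  assert (E3 : K * (eps * / (2 * (K + 1))) < eps / 2).
  { replace (K * (eps * / (2 * (K + 1)))) with (eps / 2 * (K / (K+1))) by (field; lra).
    assert (K / (K+1) < 1). { apply (Rmult_lt_reg_r (K+1)); [lra|]. unfold Rdiv. rewrite Rmult_assoc, Rinv_l by lra. lra. }
    nra. }
  lra.
Qed.

Lemma sub_bound (b : nat -> R) : (forall n m, b (n+m)%nat <= b n + b m) ->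
  forall q m r, b (q*m + r)%nat <= INR q * b m + b r.
Proof.
  intros Hs q m r. induction q; simpl.
  - lra.
  - replace (m + q * m + r)%nat with (m + (q*m + r))%nat by lia.
    eapply Rle_trans. apply Hs. destruct q; simpl in *; lra.
Qed.

Lemma sub_bound1 (b : nat -> R) : (forall n m, b (n+m)%nat <= b n + b m) ->
  forall r, b r <= INR r * b 1%nat + b 0%nat.
Proof.
  intros Hs r. pose proof (sub_bound b Hs r 1 0). replace (r*1+0)%nat with r in H by lia. lra.
Qed.

Lemma fekete0 (b : nat -> R) : (forall n, 0 <= b n) -> (forall n m, b (n+m)%nat <= b n + b m) ->
  exists l, Un_cv (fun n => b n / INR n) l.
Proof.
  intros Hb Hs.
  set (F := fun x => exists n, (0 < n)%nat /\ x = - (b n / INR n)).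
  assert (HB : bound F).
  { exists 0. intros x [n [Hn ->]]. assert (0 < INR n) by (apply lt_0_INR; lia).
    assert (0 <= b n / INR n) by (apply Rdiv_le_0_compat'; auto). lra. }
  assert (HE : exists x, F x) by (exists (- (b 1%nat / INR 1)); exists 1%nat; split; auto).
  destruct (completeness F HB HE) as [m [Hub Hlub]].
  exists (- m). intros eps Heps.
  assert (Hn0 : exists n0, (0 < n0)%nat /\ b n0 / INR n0 < - m + eps / 2).
  { apply Classical_Prop.NNPP. intro Hno.
    assert (is_upper_bound F (m - eps/2)).
    { intros x [n [Hn ->]]. destruct (Rlt_or_le (b n / INR n) (- m + eps / 2)) as [Hl|Hl].
      - exfalso; apply Hno; exists n; auto.
      - lra. }
    specialize (Hlub _ H). lra. }
  destruct Hn0 as [n0 [Hn0 Hb0]].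
  set (M := INR n0 * b 1%nat + b 0%nat).
  assert (HM : 0 <= M). { unfold M. pose proof (Hb 1%nat); pose proof (Hb 0%nat).
    assert (0 <= INR n0) by apply pos_INR. nra. }
  destruct (archimed_cor1 (eps / (2 * (M+1)))) as [N2 [HN2 HN2p]].
  { apply Rdiv_lt_0_compat; lra. }
  exists N2. intros n Hn. unfold Rdist.
  assert (P2 : 0 < INR N2) by (apply lt_0_INR; lia).
  assert (Pn : INR N2 <= INR n) by (apply le_INR; lia).
  assert (Pn' : 0 < INR n) by lra.
  assert (Hlow : - m <= b n / INR n).
  { assert (F (- (b n / INR n))) by (exists n; split; auto; lia). specialize (Hub _ H). lra. }
  set (q := (n / n0)%nat). set (r := (n mod n0)%nat).
  assert (Hdm : n = (q * n0 + r)%nat) by (unfold q, r; rewrite (Nat.div_mod n n0) at 1 by lia; lia).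
  assert (Hr : (r < n0)%nat) by (apply Nat.mod_upper_bound; lia).
  assert (Hqn : (q * n0 <= n)%nat) by lia.
  assert (Hbn : b n <= INR q * b n0 + M).
  { rewrite Hdm at 1. eapply Rle_trans. apply sub_bound; auto.
    pose proof (sub_bound1 b Hs r). assert (INR r <= INR n0) by (apply le_INR; lia).
    pose proof (Hb 1%nat). unfold M. nra. }
  assert (Hq : INR q * INR n0 <= INR n) by (rewrite <- mult_INR; apply le_INR; lia).
  assert (P0 : 0 < INR n0) by (apply lt_0_INR; lia).
  assert (Hqb : INR q * b n0 <= INR n * (b n0 / INR n0)).
  { assert (INR q * b n0 = INR q * INR n0 * (b n0 / INR n0)) by (field; lra).
    rewrite H. apply Rmult_le_compat_r; auto. apply Rdiv_le_0_compat'; auto. }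
  assert (HMn : M / INR n <= M * / INR N2).
  { unfold Rdiv. apply Rmult_le_compat_l; auto. apply Rinv_le_contravar; lra. }
  assert (HMe : M * / INR N2 < eps / 2).
  { assert (M * / INR N2 <= M * (eps / (2 * (M+1)))) by (apply Rmult_le_compat_l; lra).
    replace (M * (eps / (2 * (M + 1)))) with (eps / 2 * (M / (M+1))) in H by (field; lra).
    assert (M / (M+1) < 1). { apply (Rmult_lt_reg_r (M+1)); [lra|]. unfold Rdiv. rewrite Rmult_assoc, Rinv_l by lra. lra. }
    nra. }
  assert (Hup : b n / INR n <= b n0 / INR n0 + M / INR n).
  { apply (Rmult_le_reg_r (INR n)); auto.
    replace (b n / INR n * INR n) with (b n) by (field; lra).
    replace ((b n0 / INR n0 + M / INR n) * INR n) with (INR n * (b n0 / INR n0) + M) by (field; lra).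
    lra. }
  apply Rabs_def1; lra.
Qed.

Lemma fekete (a : nat -> R) (C : R) : (forall n, 0 <= a n) -> 0 <= C ->
  (forall n m, a (n+m)%nat <= a n + a m + C) -> exists l, Un_cv (fun n => a n / INR n) l.
Proof.
  intros Ha HC Hs. destruct (fekete0 (fun n => a n + C)) as [l Hl].
  - intro n; specialize (Ha n); lra.
  - intros n m; specialize (Hs n m); lra.
  - exists l. apply transfer with (y := fun n => a n + C) (K := C); auto.
    intro n. replace (a n - (a n + C)) with (- C) by ring. rewrite Rabs_Ropp, Rabs_pos_eq; lra.
Qed.

Lemma floor_add (x y : R) : exists e, (e = 0 \/ e = 1)%Z /\ Int_part (x + y) = (Int_part x + Int_part y + e)%Z.
Proof.
  exists (Int_part (x+y) - Int_part x - Int_part y)%Z. split; [|lia].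
  destruct (base_Int_part x) as [A1 A2]. destruct (base_Int_part y) as [B1 B2].
  destruct (base_Int_part (x+y)) as [C1 C2].
  assert (U : IZR (Int_part (x+y) - Int_part x - Int_part y) < 2)
    by (rewrite !minus_IZR; lra).
  assert (L : IZR (Int_part (x+y) - Int_part x - Int_part y) > -1)
    by (rewrite !minus_IZR; lra).
  apply lt_IZR in U. apply Rgt_lt, lt_IZR in L. lia.
Qed.

Theorem proposition2p1 (G : Group) (nu : G -> R) (k : nat) (g : nat -> G) (s : nat -> R) :
  FM G -> conj_inv_pseudo_norm nu ->
  exists l : R, Un_cv (fun n => nu (word_at k g s n) / INR n) l.
Proof.
  intros HF Hn. pose proof Hn as (H0&Hpos&Hi&Ht&Hcj).
  destruct (family G HF g k) as [c Hc].
  set (g' := fun i => gconj (c i) (g i)).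
  set (v := fun (n : nat) (i : nat) => Int_part (s i * INR n)).
  set (a := fun n => nu (Pw g' (v n) (seq 0 k))).
  set (C := sumR (fun i => nu (g' i)) (seq 0 k)).
  assert (Hcomm : forall i j, In i (seq 0 k) -> In j (seq 0 k) -> forall x y,
            gcommute (zpow (g' i) x) (zpow (g' j) y)).
  { intros i j Hi' Hj' x y. apply in_seq in Hi'. apply in_seq in Hj'.
    apply comm_zpow. destruct (Nat.eq_dec i j) as [->|Hne]. apply comm_self.
    apply Hc; lia. }
  assert (Hsub : forall n m, a (n+m)%nat <= a n + a m + C).
  { intros n m.
    set (e := fun i => (v (n+m)%nat i - v n i - v m i)%Z).
    assert (He : forall i, e i = 0%Z \/ e i = 1%Z).
    { intro i. unfold e, v. rewrite plus_INR, Rmult_plus_distr_l.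
      destruct (floor_add (s i * INR n) (s i * INR m)) as [e0 [He0 Heq]].
      rewrite Heq. lia. }
    unfold a. rewrite (Pw_ext G g' (v (n+m)%nat) (fun i => ((fun i => (v n i + v m i)%Z) i + e i)%Z))
      by (intro i; unfold e; lia).
    rewrite (Pw_add G g' (fun i => (v n i + v m i)%Z) e) by auto.
    rewrite Pw_add by auto.
    eapply Rle_trans. apply Ht. pose proof (nu_Pw01 G nu g' e (seq 0 k) Hn He).
    pose proof (Ht (Pw g' (v n) (seq 0 k)) (Pw g' (v m) (seq 0 k))). fold C in H. lra. }
  destruct (fekete a C) as [l Hl].
  - intro n; apply Hpos.
  - apply sumR_nonneg. intro; apply Hpos.
  - exact Hsub.
  - exists l. apply transfer with (y := a) (K := sumR (fun i => 2 * nu (c i)) (seq 0 k)); auto.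
    intro n. pose proof (nu_cmp G nu g c (v n) (seq 0 k) gone Hn).
    rewrite !gmul1 in H. exact H.
Qed.
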